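(* There is no connected, non-complete, $5$-regular and $1$ net-regular SRSG in $\mathcal C_1\cup\mathcal C_4\cup\mathcal C_5$ with parameters $(n,5,a,b,c)$ such that $(a,b)\in\{(2,-2),(1,1),(1,-2),(0,0),(0,-1),(-1,0),(-1,-1),(-2,2)\}$.
   Context: A signed graph $\dot G=(G,\sigma)$ is a simple graph $G$ with $\sigma:E(G)\to\{\pm1\}$; adjacency matrix $A_{\dot G}$ has entries $\sigma(v_iv_j)$ for adjacent vertices and $0$ otherwise. Degree and connectedness refer to $G$; net-degree is $d^+(v)-d^-(v)$; $\rho$ net-regular means all net-degrees equal $\rho$. $\dot G$ on $n$ vertices is an SRSG if it is neither homogeneous complete nor edgeless and there are $r\in\mathbb N$, $a,b,c\in\mathbb Z$ with $(A^2_{\dot G})_{ii}=r$, $(A^2_{\dot G})_{ij}=a$ for positive edges, $b$ for negative edges, $c$ for distinct non-adjacent pairs; parameters $(n,r,a,b,c)$. Classes: $\mathcal C_1$: $a=-b$ and (complete, or non-complete with $c\neq0$); $\mathcal C_4$: $a\ne-b$, non-complete, $c=0$; $\mathcal C_5$: $a\neq-b$, non-complete, $c\notin\{0,\frac{a+b}{2}\}$. *)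

(* Defs.v *)
From HB Require Import structures.
From mathcomp Require Import all_boot all_order all_algebra.
Set Implicit Arguments. Unset Strict Implicit. Unset Printing Implicit Defensive.
Import Order.TTheory GRing.Theory Num.Theory.
Local Open Scope ring_scope.

(* A signed graph on a finite vertex type V: a simple graph given by a
   symmetric irreflexive relation [adj], together with a sign function
   [sgn] (true = +1, false = -1), symmetric on edges. *)
Definition simple_graph (V : finType) (adj : rel V) : Prop :=
  (forall u, ~~ adj u u) /\ (forall u v, adj u v = adj v u).

Definition sign_sym (V : finType) (adj : rel V) (sgn : V -> V -> bool) : Prop :=
  forall u v, adj u v -> sgn u v = sgn v u.

Definition sA (V : finType) (adj : rel V) (sgn : V -> V -> bool) (u v : V) : int :=
  if adj u v then (if sgn u v then 1 else -1) else 0.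

Definition sA2 (V : finType) (adj : rel V) (sgn : V -> V -> bool) (u v : V) : int :=
  \sum_(w : V) sA adj sgn u w * sA adj sgn w v.

Definition complete_graph (V : finType) (adj : rel V) : Prop :=
  forall u v, u != v -> adj u v.

Definition edgeless (V : finType) (adj : rel V) : Prop :=
  forall u v, ~~ adj u v.

Definition homogeneous_complete (V : finType) (adj : rel V) (sgn : V -> V -> bool) : Prop :=
  complete_graph adj /\
  ((forall u v, adj u v -> sgn u v) \/ (forall u v, adj u v -> ~~ sgn u v)).

Definition connected (V : finType) (adj : rel V) : Prop :=
  forall u v, connect adj u v.

Definition deg (V : finType) (adj : rel V) (u : V) : nat := #|[set v | adj u v]|.

Definition regular (V : finType) (adj : rel V) (k : nat) : Prop :=
  forall u, deg adj u = k.

Definition pos_deg (V : finType) (adj : rel V) (sgn : V -> V -> bool) (u : V) : nat :=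
  #|[set v | adj u v && sgn u v]|.
Definition neg_deg (V : finType) (adj : rel V) (sgn : V -> V -> bool) (u : V) : nat :=
  #|[set v | adj u v && ~~ sgn u v]|.

Definition net_regular (V : finType) (adj : rel V) (sgn : V -> V -> bool) (rho : int) : Prop :=
  forall u, (pos_deg adj sgn u)%:Z - (neg_deg adj sgn u)%:Z = rho.

Definition SRSG (V : finType) (adj : rel V) (sgn : V -> V -> bool)
    (n r : nat) (a b c : int) : Prop :=
  #|V| = n /\
  ~ homogeneous_complete adj sgn /\ ~ edgeless adj /\
  (forall u, sA2 adj sgn u u = r%:Z) /\
  (forall u v, adj u v -> sgn u v -> sA2 adj sgn u v = a) /\
  (forall u v, adj u v -> ~~ sgn u v -> sA2 adj sgn u v = b) /\
  (forall u v, u != v -> ~~ adj u v -> sA2 adj sgn u v = c).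

Definition class_C1 (V : finType) (adj : rel V) (a b c : int) : Prop :=
  a = - b /\ (complete_graph adj \/ (~ complete_graph adj /\ c <> 0)).

Definition class_C4 (V : finType) (adj : rel V) (a b c : int) : Prop :=
  a <> - b /\ ~ complete_graph adj /\ c = 0.

(* c <> (a+b)/2 is stated as 2c <> a+b (equivalent over the integers/rationals). *)
Definition class_C5 (V : finType) (adj : rel V) (a b c : int) : Prop :=
  a <> - b /\ ~ complete_graph adj /\ c <> 0 /\ 2 * c <> a + b.

(* Main.v *)
Require Import Defs.
From HB Require Import structures.
From mathcomp Require Import all_boot all_order all_algebra.
From mathcomp Require Import zify ring lra.
Import Order.TTheory GRing.Theory Num.Theory.
Local Open Scope ring_scope.

Fixpoint gen (k d : nat) (s : int) : seq (seq int) :=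
  if (k < d)%N then [::] else
  match k with
  | 0%N => if (s == 0) then [:: [::]] else [::]
  | k'.+1 => [seq 0 :: t | t <- gen k' d s] ++
     (if d is d'.+1 then [seq 1 :: t | t <- gen k' d' (s - 1)] ++ [seq -1 :: t | t <- gen k' d' (s + 1)] else [::])
  end.
Definition cnt (l : seq int) := count (fun x => x != 0) l.
Definition sumz (l : seq int) := foldr (fun x y => x + y) 0 l.
Fixpoint dot (l1 l2 : seq int) : int := match l1, l2 with x :: l1', y :: l2' => x * y + dot l1' l2' | _, _ => 0 end.
Definition vl (a b c : int) (e : int) := if e == 1 then a else if e == -1 then b else c.
Fixpoint chk a b c (r : seq int) (rs : seq (seq int)) (k : nat) : bool :=
  match rs with [::] => true | q :: rs' => (dot r q == vl a b c (nth 0 r k)) && chk a b c r rs' k.+1 end.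
Fixpoint search (n : nat) a b c (fuel : nat) (rs : seq (seq int)) : bool :=
  match fuel with
  | 0%N => true
  | f.+1 => let i := size rs in
     let pre := [seq nth 0 r i | r <- rs] in
     let cp := cnt pre in
     if (5 < cp)%N then false else
     has (fun t => let r := pre ++ 0 :: t in if chk a b c r rs 0 then search n a b c f (rcons rs r) else false)
         (gen (n - i.+1) (5 - cp) (1 - sumz pre))
  end.
Definition row0 (n : nat) : seq int := [:: 0; 1; 1; 1; -1; -1] ++ nseq (n - 6) 0.

Definition tri (x : int) : bool := (x == 0) || (x == 1) || (x == -1).

Lemma cnt_le t : (cnt t <= size t)%N.
Proof. exact: count_size. Qed.

Lemma gen_complete t : all tri t -> t \in gen (size t) (cnt t) (sumz t).
Proof.
elim: t => [|x t IH] /=; first by rewrite /cnt /=.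
case/andP=> tx /IH {}IH.
have hle : (cnt (x :: t) <= (size t).+1)%N by exact: cnt_le.
rewrite ltnNge hle /=.
move: tx hle; rewrite /tri => /orP[/orP[]|] /eqP -> hle.
- rewrite mem_cat; apply/orP; left; rewrite /cnt /= add0n add0r.
  by apply: map_f.
- rewrite /cnt /= add1n mem_cat; apply/orP; right.
  rewrite mem_cat; apply/orP; left. rewrite add0n [1 + _]addrC addrK.
  by apply: map_f.
- rewrite /cnt /= add1n mem_cat; apply/orP; right.
  rewrite mem_cat; apply/orP; right. rewrite add0n [-1 + _]addrC addrK.
  by apply: map_f.
Qed.

Lemma sumz_cat s1 s2 : sumz (s1 ++ s2) = sumz s1 + sumz s2.
Proof. by elim: s1 => [|x s1 IH] /=; rewrite ?add0r // IH addrA. Qed.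

Lemma chkP a b c r rs k :
  (forall m, (m < size rs)%N -> dot r (nth [::] rs m) = vl a b c (nth 0 r (k + m))) ->
  chk a b c r rs k.
Proof.
elim: rs k => [|q rs IH] k //= H.
rewrite (H 0%N) // addn0 eqxx /=. apply: IH => m hm.
rewrite addSnnS. exact: (H m.+1).
Qed.

Definition good n a b c (R : seq (seq int)) :=
  size R = n /\
  forall i, (i < n)%N ->
    [/\ size (nth [::] R i) = n, nth 0 (nth [::] R i) i = 0,
        forall j, (j < n)%N -> nth 0 (nth [::] R i) j = nth 0 (nth [::] R j) i,
        all tri (nth [::] R i) &
      [/\ cnt (nth [::] R i) = 5%N, sumz (nth [::] R i) = 1 &
        forall k, (k < i)%N -> dot (nth [::] R i) (nth [::] R k) = vl a b c (nth 0 (nth [::] R i) k)]].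

Lemma sound n a b c R : good n a b c R ->
  forall i, (i <= n)%N -> search n a b c (n - i) (take i R) = true.
Proof.
move=> [hs hg] i hi.
move eqf: (n - i)%N => f. elim: f i hi eqf => [|f IH] i hi eqf //=.
have hin : (i < n)%N by rewrite -subn_gt0 eqf.
have hsz : size (take i R) = i by rewrite size_take hs hin.
rewrite hsz.
case: (hg i hin) => szr diag sym tr [cn sm dt].
set r := nth [::] R i in szr diag sym tr cn sm dt *.
have hpre : [seq nth 0 q i | q <- take i R] = take i r.
  apply: (@eq_from_nth _ 0); first by rewrite size_map hsz size_take szr hin.
  move=> m; rewrite size_map hsz => hm.
  rewrite (nth_map [::]) ?hsz // nth_take // nth_take //.
  by rewrite sym // (ltn_trans hm hin).
rewrite hpre.
have hr : r = take i r ++ 0 :: drop i.+1 r.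
  by rewrite -diag -drop_nth ?szr // cat_take_drop.
have hcnt : cnt r = (cnt (take i r) + cnt (drop i.+1 r))%N.
  by rewrite {1}hr /cnt count_cat /=.
have hsum : sumz r = sumz (take i r) + sumz (drop i.+1 r).
  by rewrite {1}hr sumz_cat /= add0r.
have hle : (cnt (take i r) <= 5)%N by rewrite -cn hcnt leq_addr.
rewrite ltnNge hle /=.
apply/hasP; exists (drop i.+1 r).
  have hd : all tri (drop i.+1 r).
    by apply/allP => x /mem_drop hx; apply: (allP tr).
  have := @gen_complete _ hd.
  rewrite size_drop szr.
  have -> : cnt (drop i.+1 r) = (5 - cnt (take i r))%N by rewrite -cn hcnt addKn.
  have -> : sumz (drop i.+1 r) = 1 - sumz (take i r) by rewrite -sm hsum [sumz (take _ _) + _]addrC addrK.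
  by [].
rewrite -hr.
have -> : chk a b c r (take i R) 0 = true.
  apply: chkP => m; rewrite hsz => hm.
  by rewrite nth_take // add0n dt.
rewrite -(take_nth [::]) ?hs //.
apply: IH => //.
by rewrite subnS eqf.
Qed.

Lemma dot_map (T : Type) (f g : T -> int) l : dot (map f l) (map g l) = \sum_(y <- l) f y * g y.
Proof. by elim: l => [|y l IH] /=; rewrite ?big_nil ?big_cons ?IH. Qed.

Lemma sumz_map (T : Type) (f : T -> int) l : sumz (map f l) = \sum_(y <- l) f y.
Proof. by elim: l => [|y l IH] /=; rewrite ?big_nil ?big_cons ?IH. Qed.

Section Bridge.
Variables (V : finType) (adj : rel V) (sgn : V -> V -> bool).
Hypotheses (hsimp : simple_graph adj) (hss : sign_sym adj sgn) (hreg : regular adj 5)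
  (hnet : net_regular adj sgn 1).

Local Notation A := (sA adj sgn).

Lemma sA_sym x y : A x y = A y x.
Proof.
rewrite /sA; case: hsimp => _ hs; rewrite hs.
by case h: (adj y x) => //; rewrite hss // hs.
Qed.

Lemma sA_diag x : A x x = 0.
Proof. by rewrite /sA; case: hsimp => hi _; rewrite (negbTE (hi x)). Qed.

Lemma sA_neq0 x y : (A x y != 0) = adj x y.
Proof. by rewrite /sA; case: (adj x y) => //; case: (sgn x y). Qed.

Lemma sA_split x y : A x y = ((adj x y && sgn x y : nat)%:Z) - ((adj x y && ~~ sgn x y : nat)%:Z).
Proof. by rewrite /sA; case: (adj x y); case: (sgn x y). Qed.

Lemma sum_ind (p : pred V) : \sum_y ((p y : nat)%:Z) = #|p|%:Z.
Proof.
rewrite -sum1_card (big_morph Posz PoszD (erefl (Posz 0%N))) [RHS]big_mkcond /=.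
by apply: eq_bigr => y _; rewrite unfold_in; case: (p y).
Qed.

Lemma sum_sA x : \sum_y A x y = 1.
Proof.
under eq_bigr => y _ do rewrite sA_split.
rewrite sumrB !sum_ind.
have := hnet x; rewrite /pos_deg /neg_deg !cardsE.
by [].
Qed.


Lemma pos_neg x : pos_deg adj sgn x = 3%N /\ neg_deg adj sgn x = 2%N.
Proof.
have h1 := hnet x.
have h2 : (pos_deg adj sgn x + neg_deg adj sgn x = 5)%N.
  rewrite -(hreg x) /deg -(cardsID [set v | sgn x v]).
  have -> : [set v | adj x v] :&: [set v | sgn x v] = [set v | adj x v && sgn x v].
    by apply/setP => v; rewrite !inE.
  have -> : [set v | adj x v] :\: [set v | sgn x v] = [set v | adj x v && ~~ sgn x v].
    by apply/setP => v; rewrite !inE andbC.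
  by [].
move: h1 h2; rewrite /pos_deg /neg_deg => h1 h2.
lia.
Qed.

Variable u0 : V.
Definition P0 := [set v | adj u0 v && sgn u0 v].
Definition Q0 := [set v | adj u0 v && ~~ sgn u0 v].
Definition R0 := [set v | (v != u0) && ~~ adj u0 v].
Definition s0 := u0 :: (enum P0 ++ enum Q0 ++ enum R0).

Lemma s0_uniq : uniq s0.
Proof.
rewrite /s0 cons_uniq !mem_cat !mem_enum !inE !cat_uniq !enum_uniq /=.
case: hsimp => hi _; rewrite (negbTE (hi u0)) eqxx /= andbT.
apply/andP; split.
  apply/hasPn => v; rewrite mem_cat !mem_enum !inE => /orP[] /andP[h1 h2].
    by rewrite h1 h2.
  by rewrite (negbTE h2).
apply/hasPn => v; rewrite !mem_enum !inE => /andP[_ h]; by rewrite (negbTE h).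
Qed.

Lemma s0_all v : v \in s0.
Proof.
rewrite /s0 inE !mem_cat !mem_enum !inE.
by case: (v =P u0) => //= _; case: (adj u0 v); case: (sgn u0 v).
Qed.

Lemma s0_size : size s0 = #|V|.
Proof.
rewrite cardE; apply: perm_size; apply: uniq_perm; first exact: s0_uniq.
  exact: enum_uniq.
by move=> v; rewrite s0_all mem_enum.
Qed.

Lemma s0_sum (F : V -> int) : \sum_(v <- s0) F v = \sum_v F v.
Proof.
rewrite big_uniq; last exact: s0_uniq.
by apply: eq_bigl => v; rewrite s0_all.
Qed.

Lemma s0_count (p : pred V) : count p s0 = #|p|.
Proof.
rewrite -size_filter -(card_uniqP _); last by rewrite filter_uniq // s0_uniq.
by apply: eq_card => v; rewrite mem_filter s0_all andbT.
Qed.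

Lemma cardP0 : #|P0| = 3%N.
Proof. by have [h _] := pos_neg u0. Qed.
Lemma cardQ0 : #|Q0| = 2%N.
Proof. by have [_ h] := pos_neg u0. Qed.

Lemma card_V : #|V| = (6 + #|R0|)%N.
Proof. by rewrite -s0_size /s0 /= !size_cat -!cardE cardP0 cardQ0. Qed.


Lemma sA_tri x y : tri (A x y).
Proof. by rewrite /sA /tri; case: (adj x y); case: (sgn x y). Qed.

Variables (n : nat) (a b c : int).
Hypothesis hsr : SRSG adj sgn n 5 a b c.

Definition Rm := [seq [seq A x y | y <- s0] | x <- s0].

Lemma Rm_good : good n a b c Rm.
Proof.
case: hsr => hn [_ [_ [hd [ha [hb hc]]]]].
have hsz : size s0 = n by rewrite s0_size.
split; first by rewrite size_map.
move=> i hi. have his : (i < size s0)%N by rewrite hsz.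
rewrite (nth_map u0) //.
set x := nth u0 s0 i.
split.
- by rewrite size_map.
- by rewrite (nth_map u0) // sA_diag.
- move=> j hj. have hjs : (j < size s0)%N by rewrite hsz.
  by rewrite (nth_map u0) // (nth_map u0) // (nth_map u0) // sA_sym.
- by apply/allP => z /mapP [y _ ->]; exact: sA_tri.
split.
- rewrite /cnt count_map.
  have -> : count (preim (A x) (fun z => z != 0)) s0 = count (adj x) s0.
    by apply: eq_count => y; rewrite /= sA_neq0.
  rewrite s0_count -(hreg x) /deg; apply: eq_card => y; by rewrite inE.
- by rewrite sumz_map s0_sum sum_sA.
- move=> k hk. have hks : (k < size s0)%N by rewrite hsz (ltn_trans hk hi).
  rewrite (nth_map u0) // dot_map (nth_map u0) //.
  set z := nth u0 s0 k.
  have -> : \sum_(y <- s0) A x y * A z y = sA2 adj sgn x z.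
    by rewrite s0_sum /sA2; apply: eq_bigr => y _; rewrite [A z y]sA_sym.
  have hxz : x != z.
    by rewrite /x /z nth_uniq ?s0_uniq // neq_ltn hk orbT.
  rewrite /vl /sA; case hadj: (adj x z); case hs: (sgn x z) => /=.
  + by rewrite ha.
  + by rewrite hb // hs.
  + by rewrite hc // hadj.
  + by rewrite hc // hadj.
Qed.

Lemma map_const_in (T : eqType) (f : T -> int) k l :
  (forall y, y \in l -> f y = k) -> map f l = nseq (size l) k.
Proof.
elim: l => [|y l IH] //= H.
by rewrite H ?mem_head // IH // => z hz; apply: H; rewrite inE hz orbT.
Qed.

Lemma Rm_row0 : nth [::] Rm 0 = row0 n.
Proof.
case: hsr => hn _.
have hn6 : (n - 6 = #|R0|)%N by rewrite -hn card_V addKn.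
rewrite /Rm /= /row0 sA_diag !map_cat.
rewrite (@map_const_in _ _ 1); last first.
  by move=> y; rewrite mem_enum inE /sA => /andP[-> ->].
rewrite (@map_const_in _ _ (-1)); last first.
  by move=> y; rewrite mem_enum inE /sA => /andP[-> /negbTE ->].
rewrite (@map_const_in _ _ 0); last first.
  by move=> y; rewrite mem_enum inE /sA => /andP[_ /negbTE ->].
by rewrite -!cardE cardP0 cardQ0 hn6.
Qed.

Lemma search_true : search n a b c (n - 1) [:: row0 n].
Proof.
case: hsr => hn _.
have hn1 : (1 <= n)%N by rewrite -hn card_V.
have := @sound _ _ _ _ _ Rm_good 1 hn1.
have -> : take 1 Rm = [:: nth [::] Rm 0].
  have hR : (0 < size Rm)%N by rewrite size_map s0_size card_V.
  by rewrite (take_nth [::]) // take0.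
by rewrite Rm_row0 => ->.
Qed.

Lemma rowsum_id : 5 + a *+ 3 + b *+ 2 + c *+ #|R0| = 1.
Proof.
case: hsr => hn [_ [_ [hd [ha [hb hc]]]]].
have h1 : \sum_v sA2 adj sgn u0 v = 1.
  rewrite /sA2 exchange_big /=.
  under eq_bigr => w _ do rewrite -mulr_sumr [X in _ * X]sum_sA mulr1.
  by rewrite sum_sA.
have eP : \sum_(v in P0) sA2 adj sgn u0 v = a *+ 3.
  rewrite (eq_bigr (fun _ => a)) ?sumr_const ?cardP0 // => v.
  by rewrite inE => /andP[]; exact: ha.
have eQ : \sum_(v in Q0) sA2 adj sgn u0 v = b *+ 2.
  rewrite (eq_bigr (fun _ => b)) ?sumr_const ?cardQ0 // => v.
  by rewrite inE => /andP[]; exact: hb.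
have eR : \sum_(v in R0) sA2 adj sgn u0 v = c *+ #|R0|.
  rewrite (eq_bigr (fun _ => c)) ?sumr_const // => v.
  by rewrite inE => /andP[h1' h2]; apply: hc; rewrite // eq_sym.
rewrite -[RHS]h1 -s0_sum /s0 big_cons !big_cat /= !big_enum /= hd eP eQ eR.
by rewrite !addrA.
Qed.

End Bridge.

Lemma handshake (V : finType) (adj : rel V) : simple_graph adj -> regular adj 5 -> ~~ odd #|V|.
Proof.
move=> [hi hs] hreg.
pose o := @enum_rank V.
have hdeg x : deg adj x = (\sum_y (adj x y : nat))%N.
  rewrite /deg -sum1_card [LHS]big_mkcond /=; apply: eq_bigr => y _; rewrite inE.
  by case: (adj x y).
have hsplit x y : (adj x y : nat) = ((adj x y && (o x < o y)%N : nat) + (adj y x && (o y < o x)%N : nat))%N.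
  rewrite (hs y x). case h: (adj x y) => //=.
  have hne : o x != o y.
    apply/eqP => /enum_rank_inj exy; subst y. by rewrite (negbTE (hi x)) in h.
  by move: hne; rewrite -(inj_eq val_inj) /=; case: ltngtP.
have e : (\sum_x deg adj x = (\sum_x \sum_y (adj x y && (o x < o y)%N : nat)).*2)%N.
  under eq_bigr => x _ do rewrite hdeg.
  under eq_bigr => x _ do under eq_bigr => y _ do rewrite hsplit.
  under eq_bigr => x _ do rewrite big_split /=.
  rewrite big_split /= -addnn; congr (_ + _)%N.
  by rewrite exchange_big.
have : (\sum_x deg adj x = #|V| * 5)%N.
  rewrite (eq_bigr (fun _ => 5%N)) // sum_nat_const //.
rewrite e => /(congr1 odd); rewrite odd_double oddM /= andbT => <-.
by [].
Qed.

Definition abl : seq (int * int) :=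
  [:: (2, -2); (1, 1); (1, -2); (0, 0); (0, -1); (-1, 0); (-1, -1); (-2, 2)].
Definition cs : seq int := [seq i%:Z - 9 | i <- iota 0 19].

Definition checkall : bool :=
  all (fun ab => all (fun m => all (fun c =>
      if 5 + ab.1 *+ 3 + ab.2 *+ 2 + c *+ (m.*2) == 1
      then ~~ search (6 + m.*2) ab.1 ab.2 c ((6 + m.*2) - 1) [:: row0 (6 + m.*2)] else true)
      cs) (iota 1 9)) abl.

Lemma checkall_ok : checkall.
Proof. vm_compute. reflexivity. Qed.

Lemma abl_ne : all (fun ab => 5 + ab.1 *+ 3 + ab.2 *+ 2 != 1) abl.
Proof. vm_compute. reflexivity. Qed.

Lemma abl_bd : all (fun ab => (-2 <= ab.1 <= 2) && (-2 <= ab.2 <= 2)) abl.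
Proof. vm_compute. reflexivity. Qed.

Theorem mainTheorem13 (V : finType) (adj : rel V) (sgn : V -> V -> bool)
    (n : nat) (a b c : int) :
  simple_graph adj -> sign_sym adj sgn ->
  connected adj -> ~ complete_graph adj ->
  regular adj 5 -> net_regular adj sgn 1 ->
  SRSG adj sgn n 5 a b c ->
  class_C1 adj a b c \/ class_C4 adj a b c \/ class_C5 adj a b c ->
  (a, b) \in [:: (2, -2); (1, 1); (1, -2); (0, 0); (0, -1); (-1, 0); (-1, -1); (-2, 2)] ->
  False.
Proof.
move=> hsimp hss _ hnc hreg hnet hsr _ hab.
have hab' : (a, b) \in abl := hab.
have [u [v [huv hadj]]] : exists u v, u != v /\ ~~ adj u v.
  case: (boolP [exists u, exists v, (u != v) && ~~ adj u v]).
    by move=> /existsP [u /existsP [v /andP [h1 h2]]]; exists u, v.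
  move=> /existsPn H; exfalso; apply: hnc => x y hxy.
  by move: (H x) => /existsPn /(_ y); rewrite hxy /= negbK.
have hk : (1 <= #|R0 V adj u|)%N.
  by apply/card_gt0P; exists v; rewrite inE eq_sym huv.
have hn : n = (6 + #|R0 V adj u|)%N.
  by case: hsr => <- _; rewrite (card_V _ _ _ hsimp hreg hnet u).
have hodd : ~~ odd n by case: hsr => <- _; exact: (handshake _ _ hsimp hreg).
have hid := rowsum_id _ _ _ hsimp hreg hnet u _ _ _ _ hsr.
have hs := search_true _ _ _ hsimp hss hreg hnet u _ _ _ _ hsr.
move: hk hid hodd hn; set k := #|R0 V adj u| => hk hid hodd hn.
have [m hm] : exists m, k = m.*2.
  exists k./2. rewrite -[LHS]odd_double_half.
  by move: hodd; rewrite hn oddD /= => /negbTE ->.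
rewrite hm in hn hid hk.
have hc0 : c != 0.
  apply/eqP => c0; subst c; rewrite mul0rn addr0 in hid.
  by have := allP abl_ne _ hab'; rewrite /= hid eqxx.
have /andP [/andP [ha1 ha2] /andP [hb1 hb2]] := allP abl_bd _ hab'.
rewrite /= in ha1 ha2 hb1 hb2.
have hid' := hid; rewrite !pmulrn !mulrzz in hid'.
have hcs : (1 <= c) \/ (c <= -1) by lia.
have hmb : (m <= 8)%N by case: hcs => ?; nia.
have hcb : (-9 <= c <= 9) by apply/andP; split; case: hcs => ?; nia.
have hmm : m \in iota 1 9 by rewrite mem_iota; lia.
have hcc : c \in cs.
  apply/mapP; exists (absz (c + 9)); first by rewrite mem_iota; lia.
  lia.
have := allP (allP (allP checkall_ok _ hab') _ hmm) _ hcc.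
rewrite hid eqxx => H; move: hs; rewrite hn; exact: (negP H).
Qed.
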